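(* Let $(\mathbf x,B)$ be a seed of $\mathcal F$ and assume that the cluster monomials of $\mathcal A(\mathbf x,B)$ are linearly independent over $K$. Let $(\mathbf y,C)$ be a seed mutation equivalent to $(\mathbf x,B)$ and let $(\mathbf z,D)=\mu_n\cdots\mu_2\mu_1(\mathbf y,C)$. Then the clusters $\mathbf y$ and $\mathbf z$ are disjoint, i.e. $\{y_1,\dots,y_n\}\cap\{z_1,\dots,z_n\}=\varnothing$.
   Context: Let $K$ be a field of characteristic $0$ or $K=\mathbb Z$. Fix integers $m\ge p\ge n\ge 1$ with $m>1$, and let $\mathcal F=K(X_1,\dots,X_m)$. For $B=(b_{ij})\in M_{m,n}(\mathbb Z)$ the principal part $B^\circ$ is the $n\times n$ matrix formed by the first $n$ rows. $B$ is connected if the graph with vertices $1,\dots,m$ and an edge between $i$ and $j$ whenever $b_{ij}\neq 0$ or $b_{ji}\ne 0$ is connected. A square integer matrix $A$ is skew-symmetrizable if $DA$ is skew-symmetric for some diagonal integer matrix $D$ with positive diagonal entries. A seed of $\mathcal F$ is a pair $(\mathbf x,B)$ where $B\in M_{m,n}(\mathbb Z)$ is connected with $B^\circ$ skew-symmetrizable, and $\mathbf x=(x_1,\dots,x_m)$ is an $m$-tuple of elements of $\mathcal F$ algebraically independent over $K$. For $1\le k\le n$ the mutation $\mu_k(\mathbf x,B)=(\mathbf x',B')$ is given by $b'_{ij}=-b_{ij}$ if $i=k$ or $j=k$, and $b'_{ij}=b_{ij}+\frac{|b_{ik}|b_{kj}+b_{ik}|b_{kj}|}{2}$ otherwise;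 $x'_s=x_s$ for $s\neq k$ and $x'_k=x_k^{-1}\big(\prod_{b_{ik}>0}x_i^{b_{ik}}+\prod_{b_{ik}<0}x_i^{-b_{ik}}\big)$. Two seeds are mutation equivalent if one is obtained from the other by a finite sequence of mutations $\mu_{i_1},\dots,\mu_{i_t}$ with $1\le i_j\le n$. The cluster algebra $\mathcal A(\mathbf x,B)$ is the $K$-subalgebra of $\mathcal F$ generated by $x_{n+1}^{\pm1},\dots,x_p^{\pm1},x_{p+1},\dots,x_m$ together with all elements $y_1,\dots,y_n$ for all seeds $(\mathbf y,C)$ mutation equivalent to $(\mathbf x,B)$; for such a seed, $\mathbf y$ is a cluster, and the elements $y_1^{a_1}\cdots y_m^{a_m}$ with all $a_i\ge 0$ (over all clusters $\mathbf y$) are the cluster monomials. *)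

(* Defs.v *)
From HB Require Import structures.
From mathcomp Require Import all_boot all_order all_algebra.
From mathcomp Require Import fraction.
From mathcomp.multinomials Require Import mpoly.
Set Implicit Arguments. Unset Strict Implicit. Unset Printing Implicit Defensive.
Import Order.TTheory GRing.Theory Num.Theory.
Local Open Scope ring_scope.

Notation ratfun K m := {fraction {mpoly K[m]}}.

Section ClusterDefs.
Variables (K : idomainType) (m n : nat).
Local Notation F := (ratfun K m).

Definition kemb (c : K) : F := tofrac (c%:MP_[m]).

(* seeds: pairs (x, B) with x : 'I_m -> F (x_i = x (i-1)) and B an m x n
   integer matrix; indices are 0-based *)
Definition seedT := (('I_m -> F) * 'M[int]_(m, n))%type.

(* entry b_{ij} for i, j in {1..m}; 0 when j > n (undefined in the paper,
   only used so that "b_ij <> 0 or b_ji <> 0" reads as in the paper) *)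
Definition bent (B : 'M[int]_(m, n)) (i j : 'I_m) : int :=
  match (insub (val j) : option 'I_n) with
  | Some j' => B i j'
  | None => 0
  end.

Definition connected_mx (B : 'M[int]_(m, n)) : Prop :=
  forall i j : 'I_m,
    connect (fun a b => (bent B a b != 0) || (bent B b a != 0)) i j.

Definition principal_part (B : 'M[int]_(m, n)) (le_nm : (n <= m)%N) : 'M[int]_n :=
  \matrix_(i < n, j < n) B (widen_ord le_nm i) j.

Definition skew_symmetrizable (A : 'M[int]_n) : Prop :=
  exists d : 'I_n -> int, (forall i, 0 < d i) /\
    forall i j, d i * A i j = - (d j * A j i).

Definition alg_indep (x : 'I_m -> F) : Prop :=
  forall P : {mpoly K[m]}, mmap kemb x P = 0 -> P = 0.

Definition is_seed (le_nm : (n <= m)%N) (S : seedT) : Prop :=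
  connected_mx S.2 /\ skew_symmetrizable (principal_part S.2 le_nm)
  /\ alg_indep S.1.

Definition mutate_mx (le_nm : (n <= m)%N) (k : 'I_n) (B : 'M[int]_(m, n))
  : 'M[int]_(m, n) :=
  \matrix_(i < m, j < n)
    if (val i == val k) || (j == k) then - B i j
    else B i j + ((`|B i k| * B (widen_ord le_nm k) j
                   + B i k * `|B (widen_ord le_nm k) j|) %/ 2)%Z.

Definition mutate_cl (k : 'I_n) (x : 'I_m -> F) (B : 'M[int]_(m, n))
  : 'I_m -> F :=
  fun s => if val s == val k then
    (x s)^-1 * (\prod_(i < m | 0 < B i k) x i ^+ `|B i k|%N
              + \prod_(i < m | B i k < 0) x i ^+ `|B i k|%N)
  else x s.

Definition mutate (le_nm : (n <= m)%N) (k : 'I_n) (S : seedT) : seedT :=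
  (mutate_cl k S.1 S.2, mutate_mx le_nm k S.2).

(* mutations applied in the order of the list: mutates [:: k1; ...; kt] S
   = mu_kt ... mu_k1 S *)
Definition mutates (le_nm : (n <= m)%N) (s : seq 'I_n) (S : seedT) : seedT :=
  foldl (fun T k => mutate le_nm k T) S s.

Definition mut_equiv (le_nm : (n <= m)%N) (S T : seedT) : Prop :=
  exists s : seq 'I_n, T = mutates le_nm s S.

Definition cluster_monomial (le_nm : (n <= m)%N) (S : seedT) (u : F) : Prop :=
  exists (T : seedT) (a : 'I_m -> nat),
    mut_equiv le_nm S T /\ u = \prod_(i < m) T.1 i ^+ a i.

Definition K_lin_indep (P : F -> Prop) : Prop :=
  forall (s : seq F) (c : F -> K), uniq s -> (forall u, u \in s -> P u) ->
    \sum_(u <- s) kemb (c u) * u = 0 -> forall u, u \in s -> c u = 0.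

Definition prop43_for : Prop :=
  forall (p : nat) (le_nm : (n <= m)%N), (p <= m)%N -> (n <= p)%N -> (1 <= n)%N ->
    (1 < m)%N ->
  forall S : seedT, is_seed le_nm S ->
  K_lin_indep (cluster_monomial le_nm S) ->
  forall T : seedT, mut_equiv le_nm S T ->
  let U := mutates le_nm (enum 'I_n) T in
  forall i j : 'I_n, T.1 (widen_ord le_nm i) != U.1 (widen_ord le_nm j).

End ClusterDefs.

(* Main.v *)
Require Import Defs.
From HB Require Import structures.
From mathcomp Require Import all_boot all_order all_algebra.
From mathcomp Require Import fraction.
From mathcomp.multinomials Require Import mpoly.
Import GRing.Theory.
Local Open Scope ring_scope.

Section S.
Variables (K : idomainType) (m : nat).
Lemma kembD (a b : K) : kemb m (a + b) = kemb m a + kemb m b.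
Proof. by rewrite /kemb mpolyCD rmorphD. Qed.
Lemma kemb0 : kemb m (0:K) = 0.
Proof. by rewrite /kemb mpolyC0 tofrac0. Qed.
Lemma kemb1 : kemb m (1:K) = 1.
Proof. by rewrite /kemb mpolyC1 tofrac1. Qed.
Lemma kembN (a : K) : kemb m (- a) = - kemb m a.
Proof. by rewrite /kemb mpolyCN rmorphN. Qed.
Lemma kemb_sum (I : Type) (r : seq I) (P : pred I) (f : I -> K) :
  kemb m (\sum_(i <- r | P i) f i) = \sum_(i <- r | P i) kemb m (f i).
Proof.
elim: r => [|i r IH]; first by rewrite !big_nil kemb0.
by rewrite !big_cons; case: (P i); rewrite ?kembD IH.
Qed.

Local Notation F := {fraction {mpoly K[m]}}.

Lemma lin_indep_sum (P : F -> Prop) (L : seq (K * F)) :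
  K_lin_indep P -> (forall v, v \in L -> P v.2) ->
  \sum_(v <- L) kemb m v.1 * v.2 = 0 -> \sum_(v <- L) v.1 = 0.
Proof.
move=> HP HL Hs.
pose s := undup (map snd L).
pose c u := \sum_(v <- L | v.2 == u) v.1.
have key : forall (G : Type) (V : nmodType) (g : K * F -> V),
  \sum_(u <- s) \sum_(v <- L | v.2 == u) g v = \sum_(v <- L) g v.
  move=> G V g; under eq_bigr do rewrite big_mkcond.
  rewrite exchange_big /=; apply: eq_big_seq => v vL.
  rewrite -big_mkcond -big_filter.
  have -> : [seq i <- s | v.2 == i] = [:: v.2].
    rewrite (eq_filter (a2 := pred1 v.2)); last by move=> i; rewrite /= eq_sym.
    apply: filter_pred1_uniq; first exact: undup_uniq.
    by rewrite mem_undup; apply: map_f.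
  by rewrite big_seq1.
have Hc : forall u, u \in s -> c u = 0.
  apply: (HP s c (undup_uniq _)).
  - move=> u; rewrite mem_undup => /mapP [v vL ->]; exact: HL.
  - apply: (etrans _ Hs); rewrite -(key unit _ (fun v => kemb m v.1 * v.2)).
    apply: eq_bigr => u _; rewrite kemb_sum mulr_suml.
    by apply: eq_bigr => v /eqP ->.
rewrite -(key unit _ (fun v => v.1)).
by rewrite big_seq big1 // => u us; apply: Hc.
Qed.
End S.

Section Main.
Variables (K : idomainType) (m n : nat) (le_nm : (n <= m)%N).
Local Notation F := {fraction {mpoly K[m]}}.

Lemma mutates_cat (s1 s2 : seq 'I_n) (S : seedT K m n) :
  mutates le_nm (s1 ++ s2) S = mutates le_nm s2 (mutates le_nm s1 S).
Proof. exact: foldl_cat. Qed.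

Lemma mutates_fix (s : seq 'I_n) (W : seedT K m n) (j : 'I_n) : j \notin s ->
  (mutates le_nm s W).1 (widen_ord le_nm j) = W.1 (widen_ord le_nm j).
Proof.
elim: s W => [|k s IH] W //=; rewrite in_cons negb_or => /andP[njk njs].
rewrite /mutates /= -/(mutates le_nm s _) IH // /mutate /= /mutate_cl /=.
by have -> : (val j == val k) = false by exact: (negbTE njk).
Qed.

Lemma cm_cond (S T : seedT K m n) (Q : pred 'I_m) (e : 'I_m -> nat) :
  mut_equiv le_nm S T ->
  cluster_monomial le_nm S (\prod_(i < m | Q i) T.1 i ^+ e i).
Proof.
move=> HT; exists T, (fun i => if Q i then e i else 0%N); split => //.
by rewrite big_mkcond; apply: eq_bigr => i _; case: (Q i).
Qed.

Lemma cm_mul2 (S T : seedT K m n) (a b : 'I_m) :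
  mut_equiv le_nm S T -> cluster_monomial le_nm S (T.1 a * T.1 b).
Proof.
move=> HT; exists T, (fun i => ((i == a) : nat) + ((i == b) : nat))%N; split => //.
rewrite (eq_bigr _ (fun i _ => exprD _ _ _)) big_split /=.
have E c : \prod_(i < m) T.1 i ^+ (i == c) = T.1 c.
  rewrite (bigD1 c) //= eqxx expr1 big1 ?mulr1 // => i /negbTE ->.
  by rewrite expr0.
by rewrite !E.
Qed.

Lemma mut_equiv_ext (S T : seedT K m n) (s : seq 'I_n) :
  mut_equiv le_nm S T -> mut_equiv le_nm S (mutates le_nm s T).
Proof. by case=> s0 ->; exists (s0 ++ s); rewrite mutates_cat. Qed.

Lemma main_prop : prop43_for K m n.
Proof.
move=> p le'; have -> : le' = le_nm by apply: bool_irrelevance.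
move=> _ _ _ _ S _ HL T HT U i j.
subst U; apply/eqP => Heq.
have jin : j \in enum 'I_n by rewrite mem_enum.
have [s1 [s2 E]] : exists s1 s2, enum 'I_n = s1 ++ j :: s2.
  by case/splitPr: jin => s1 s2; exists s1, s2.
have := enum_uniq 'I_n; rewrite E cat_uniq /= => /and3P[_ /norP[jn1 _] /andP[jn2 _]].
move: Heq; rewrite E mutates_cat /mutates /= -/(mutates le_nm s2 _).
rewrite mutates_fix // -/(mutates le_nm s1 T).
set W := mutates le_nm s1 T.
have Wj : W.1 (widen_ord le_nm j) = T.1 (widen_ord le_nm j) by rewrite mutates_fix.
have HW : mut_equiv le_nm S W by apply: mut_equiv_ext.
rewrite /mutate /mutate_cl /= eqxx Wj => Heq.
set P1 := \prod_(i0 < m | 0 < W.2 i0 j) W.1 i0 ^+ `|W.2 i0 j|%N in Heq.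
set P2 := \prod_(i0 < m | W.2 i0 j < 0) W.1 i0 ^+ `|W.2 i0 j|%N in Heq.
set a := T.1 (widen_ord le_nm i) in Heq.
set b := T.1 (widen_ord le_nm j) in Heq.
have [b0|bn0] := eqVneq b 0.
  have mem1 : forall v, v \in [:: ((1:K), b * b)] -> cluster_monomial le_nm S v.2.
    by move=> v; rewrite inE => /eqP -> /=; exact: cm_mul2.
  have sum1 : \sum_(v <- [:: ((1:K), b * b)]) kemb m v.1 * v.2 = 0.
    by rewrite big_seq1 /= b0 mulr0 mulr0.
  have /eqP := @lin_indep_sum K m _ _ HL mem1 sum1.
  by rewrite big_seq1 oner_eq0.
have Hab : a * b = P1 + P2 by rewrite Heq mulrAC mulVf // mul1r.
pose L := [:: ((1:K), a * b); (-1, P1); (-1, P2)].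
have mem1 : forall v, v \in L -> cluster_monomial le_nm S v.2.
  move=> v; rewrite !inE => /or3P[] /eqP -> /=.
  - exact: cm_mul2.
  - exact: cm_cond.
  - exact: cm_cond.
have sum1 : \sum_(v <- L) kemb m v.1 * v.2 = 0.
  rewrite !big_cons big_nil /= kemb1 !kembN !mul1r !mulN1r Hab.
  by rewrite addr0 -opprD subrr.
have /eqP := @lin_indep_sum K m _ _ HL mem1 sum1.
by rewrite !big_cons big_nil /= addr0 addrA subrr sub0r oppr_eq0 oner_eq0.
Qed.
End Main.

Theorem proposition4p3 :
  (forall (K : fieldType) (m n : nat), [pchar K]%R =i pred0 -> prop43_for K m n)
  /\ (forall m n : nat, prop43_for int m n).
Proof.
split.
- move=> K m n _ p le_nm; exact: (@main_prop K m n le_nm p le_nm).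
- move=> m n p le_nm; exact: (@main_prop int m n le_nm p le_nm).
Qed.
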